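(* Let $F$ be a sensori-computational device and $N\subseteq Y(F)$. If there exists a sensori-computational device that output simulates $F$ modulo the $N$-shrink $\pi_N$ (with $L=\mathcal{L}(F)$, $\Sigma=Y(F)$), then there exists a sensori-computational device that output simulates $F$ modulo the $N$-pump $P_N$ (with $L=\mathcal{L}(F)$, $\Sigma=Y(F)$).
   Context: A sensori-computational device is a 6-tuple $F=(V,V_0,Y,\tau,C,c)$ where $V$ is a non-empty finite set of states, $V_0\subseteq V$ a non-empty set of initial states, $Y=Y(F)$ a finite set of observations, $\tau:V\times V\to\mathcal{P}(Y)$, $C$ a set of outputs, $c:V\to\mathcal{P}(C)\setminus\{\emptyset\}$. A string $y_1\cdots y_n$ reaches $w$ from $v$ if there are states $w_0=v,\dots,w_n=w$ with $y_i\in\tau(w_{i-1},w_i)$; $\mathcal{R}_F(s)$ is the set of states reached by $s$ from some initial state; $\mathcal{L}(F)=\{s\in Y^*:\mathcal{R}_F(s)\ne\emptyset\}$; $\mathcal{C}_F(s)=\bigcup_{v\in\mathcal{R}_F(s)}c(v)$. For a relation $R\subseteq A\times B$ between sets of strings, $F'$ output simulates $F$ modulo $R$ if for every $s\in\mathcal{L}(F)$: (1) some $t\in\mathcal{L}(F')$ has $s\,R\,t$; (2) every $t\in B$ with $s\,R\,t$ satisfies $t\in\mathcal{L}(F')$ and $\mathcal{C}_F(s)\supseteq\mathcal{C}_{F'}(t)$. For a set $\Sigma$, $L\subseteq\Sigma^*$ and $N\subseteq\Sigma$: the $N$-shrink is the function $\pi_N:L\to(\Sigma\setminus N)^*$ deleting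 every occurrence of symbols of $N$ from a string (so $\pi_N(\epsilon)=\epsilon$). The $N$-pump is the relation $P_N\subseteq L\times\Sigma^*$ defined as the smallest relation such that $\epsilon\,P_N\,\epsilon$, $s\,P_N\,s$ for every $s\in L$, and whenever $s\,P_N\,t_1\cdots t_\ell$, then $s\,P_N\,t_1\cdots t_k\,b\,t_{k+1}\cdots t_\ell$ for every $b\in N$ and $k\in\{1,\dots,\ell\}$ (elements of $N$ are inserted anywhere except before the first symbol). *)

(* Defs.v *)
From mathcomp Require Import all_boot.
Set Implicit Arguments. Unset Strict Implicit. Unset Printing Implicit Defensive.

(* All devices share an ambient symbol type S (each device's observation set
   Y(F) is a finite list of symbols of S) and an ambient output type O (the
   output set C and the sets c(v) are predicates on O). *)
Section Device.
Variables (S : eqType) (O : Type).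

Record device := Device {
  dV : finType;
  dV0 : {set dV};
  dY : seq S;
  dtau : dV -> dV -> pred S;
  dC : O -> Prop;
  dc : dV -> O -> Prop;
  dV0_nonempty : dV0 != set0;
  dtau_sub : forall v w y, dtau v w y -> y \in dY;
  dc_sub : forall v o, dc v o -> dC o;
  dc_nonempty : forall v, exists o, dc v o
}.

Fixpoint reaches (F : device) (s : seq S) (v w : dV F) : Prop :=
  match s with
  | [::] => v = w
  | y :: s' => exists u : dV F, dtau v u y /\ @reaches F s' u w
  end.

Definition reached (F : device) (s : seq S) (w : dV F) : Prop :=
  exists2 v, v \in dV0 F & reaches s v w.

Definition lang (F : device) (s : seq S) : Prop := exists w : dV F, reached s w.

Definition outs (F : device) (s : seq S) (o : O) : Prop :=
  exists2 w : dV F, reached s w & dc w o.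

Definition output_simulates (F' F : device) (R : seq S -> seq S -> Prop) : Prop :=
  forall s, lang F s ->
    (exists t, R s t /\ lang F' t) /\
    (forall t, R s t -> lang F' t /\ (forall o, outs F' t o -> outs F s o)).

Definition shrink_rel (L : seq S -> Prop) (N : seq S) (s t : seq S) : Prop :=
  L s /\ t = [seq x <- s | x \notin N].

(* N-pump P_N ⊆ L × Σ^* : smallest relation with eps P eps, s P s (s ∈ L),
   and insertion of b ∈ N after position k ∈ {1..ℓ}. *)
Inductive pump (L : seq S -> Prop) (N : seq S) : seq S -> seq S -> Prop :=
  | pump_eps : pump L N [::] [::]
  | pump_refl s : L s -> pump L N s s
  | pump_ins s t1 t2 b : pump L N s (t1 ++ t2) -> b \in N -> 0 < size t1 ->
      pump L N s (t1 ++ b :: t2).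

End Device.

(* Main.v *)
Require Import Defs.
From mathcomp Require Import all_boot.
Set Implicit Arguments. Unset Strict Implicit. Unset Printing Implicit Defensive.

Section Aux.
Variables (S : eqType) (O : Type) (F' : device S O) (N : seq S).

Definition tau2 (v w : dV F') : pred S :=
  [pred y | ((y \notin N) && dtau v w y) || ((y \in N) && (v == w))].

Lemma tau2_sub v w y : tau2 v w y -> y \in dY F' ++ N.
Proof.
rewrite /tau2 inE mem_cat => /orP[/andP[_ H]|/andP[H _]].
- by rewrite (dtau_sub H).
- by rewrite H orbT.
Qed.

Definition F2 : device S O :=
  @Device S O (dV F') (dV0 F') (dY F' ++ N) tau2 (@dC _ _ F') (@dc _ _ F')
    (dV0_nonempty F') tau2_sub (@dc_sub _ _ F') (@dc_nonempty _ _ F').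

Lemma reaches2 t (v w : dV F') :
  @reaches S O F2 t v w <-> @reaches S O F' [seq x <- t | x \notin N] v w.
Proof.
elim: t v => [|y t IH] v /=; first by [].
case: (boolP (y \in N)) => Hy /=.
- split.
  + move=> [u [Hu Hr]]; move: Hu; rewrite /= /tau2 inE Hy /= => /eqP Hvu; subst u.
    by apply/IH.
  + move=> H; exists v; split; last by apply/IH.
    by rewrite /= /tau2 inE Hy /= eqxx.
- split.
  + move=> [u [Hu Hr]]; exists u; split; last by apply/IH.
    by move: Hu; rewrite /= /tau2 inE Hy (negbTE Hy) /= orbF.
  + move=> [u [Hu Hr]]; exists u; split; last by apply/IH.
    by rewrite /= /tau2 inE Hy /= Hu.
Qed.

Lemma lang2 t : lang F2 t <-> lang F' [seq x <- t | x \notin N].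
Proof.
split=> [[w [v Hv Hr]]|[w [v Hv Hr]]]; exists w; exists v => //; by apply/reaches2.
Qed.

Lemma outs2 t o : outs F2 t o -> outs F' [seq x <- t | x \notin N] o.
Proof.
move=> [w [v Hv Hr] Ho]; exists w => //; exists v => //; by apply/reaches2.
Qed.
End Aux.

Lemma pump_filter (S : eqType) (L : seq S -> Prop) (N : seq S) s t :
  pump L N s t -> [seq x <- t | x \notin N] = [seq x <- s | x \notin N].
Proof.
elim=> // s' t1 t2 b _ IH Hb _.
by rewrite -IH !filter_cat /= Hb.
Qed.

Theorem lemma4 (S : eqType) (O : Type) (F : device S O) (N : seq S) :
  {subset N <= dY F} ->
  (exists F' : device S O, output_simulates F' F (shrink_rel (lang F) N)) ->
  exists F' : device S O, output_simulates F' F (pump (lang F) N).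
Proof.
move=> _ [F' HF]; exists (F2 F' N) => s Hs.
have [_ H2] := HF s Hs.
have [Hl Ho] := H2 _ (conj Hs erefl).
split.
- exists s; split; [exact: pump_refl Hs | exact: (proj2 (lang2 F' N s) Hl)].
- move=> t Hp; rewrite /= in Hp; have Hf := pump_filter Hp.
  split; first by apply: (proj2 (lang2 F' N t)); rewrite Hf.
  move=> o Ho2; apply: Ho; rewrite -Hf; exact: outs2 Ho2.
Qed.
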